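(* Let $(G,M,\Delta)$ be a Garside structure, $\mathcal S=\mathrm{Div}(\Delta)\setminus\{1\}$ and $\lg$ the word length on $G$ with respect to $\mathcal S$. Let $\alpha\in G$ and let $\alpha=\Delta^p a$ be its left $\Delta$-form. Then: (1) if $p\ge0$, $\lg(\alpha)=\lg(a)+p$; (2) if $p\le-\lg(a)$, $\lg(\alpha)=-p$; (3) if $-\lg(a)\le p\le0$, $\lg(\alpha)=\lg(a)$. In summary, $\lg(\alpha)=\max(\lg(a)+p,\,-p,\,\lg(a))$.
   Context: Let $G$ be a group and $M$ a submonoid with $M\cap M^{-1}=\{1\}$. Define $\alpha\le_L\beta$ iff $\alpha^{-1}\beta\in M$, and $\alpha\le_R\beta$ iff $\beta\alpha^{-1}\in M$. For $a\in M$ let $\mathrm{Div}_L(a)=\{b\in M: b\le_L a\}$, $\mathrm{Div}_R(a)=\{b\in M: b\le_R a\}$; $a$ is balanced if these coincide, and then $\mathrm{Div}(a)$ denotes this set. $M$ is Noetherian if each $a\in M$ admits an $n$ such that $a$ is not a product of more than $n$ non-trivial factors. A Garside structure $(G,M,\Delta)$: $\Delta\in M$ balanced, $M$ Noetherian, $\mathrm{Div}(\Delta)$ finite and generating $M$ as a monoid and $G$ as a group, $(G,\le_L)$ a lattice. An element $a\in M$ is unmovable if $\Delta\not\le_L a$. Every $\alpha\in G$ can be written uniquely as $\alpha=\Delta^p a$ with $p\in\mathbb Z$ and $a\in M$ unmovable; this is its left $\Delta$-form. *)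

(* Defs.v *)
From Stdlib Require Import ZArith List Lia ClassicalEpsilon.
Import ListNotations.
Open Scope Z_scope.

Record Group := MkGroup {
  carrier :> Type;
  gmul : carrier -> carrier -> carrier;
  gone : carrier;
  ginv : carrier -> carrier;
  gmulA : forall x y z, gmul x (gmul y z) = gmul (gmul x y) z;
  gmul1l : forall x, gmul gone x = x;
  gmulVl : forall x, gmul (ginv x) x = gone
}.

Arguments gmul {g}.
Arguments gone {g}.
Arguments ginv {g}.

Section Garside.
Variable G : Group.

Definition gprod (l : list G) : G := fold_right gmul gone l.

Definition zpow (x : G) (p : Z) : G :=
  match p with
  | Z0 => gone
  | Zpos n => gprod (repeat x (Pos.to_nat n))
  | Zneg n => gprod (repeat (ginv x) (Pos.to_nat n))
  end.

Definition submonoid (M : G -> Prop) : Prop :=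
  M gone /\ (forall x y, M x -> M y -> M (gmul x y)).

Definition pointed (M : G -> Prop) : Prop :=
  forall x, M x -> M (ginv x) -> x = gone.

Definition le_L (M : G -> Prop) (x y : G) : Prop := M (gmul (ginv x) y).
Definition le_R (M : G -> Prop) (x y : G) : Prop := M (gmul y (ginv x)).

Definition Div_L (M : G -> Prop) (a b : G) : Prop := M b /\ le_L M b a.
Definition Div_R (M : G -> Prop) (a b : G) : Prop := M b /\ le_R M b a.

Definition balanced (M : G -> Prop) (a : G) : Prop :=
  M a /\ forall b, Div_L M a b <-> Div_R M a b.

(* for balanced a, Div(a) *)
Definition Div (M : G -> Prop) (a : G) : G -> Prop := Div_L M a.

Definition noetherian (M : G -> Prop) : Prop :=
  forall a, M a -> exists n : nat, forall l : list G,
    (forall x, In x l -> M x /\ x <> gone) -> gprod l = a -> (length l <= n)%nat.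

Definition finite_set (P : G -> Prop) : Prop :=
  exists l : list G, forall x, P x -> In x l.

Definition generates_monoid (P : G -> Prop) (M : G -> Prop) : Prop :=
  forall a, M a <-> exists l : list G, (forall x, In x l -> P x) /\ gprod l = a.

Definition generates_group (P : G -> Prop) : Prop :=
  forall a : G, exists l : list G,
    (forall x, In x l -> P x \/ P (ginv x)) /\ gprod l = a.

Definition is_lattice (le : G -> G -> Prop) : Prop :=
  forall x y,
    (exists m, le m x /\ le m y /\ forall z, le z x -> le z y -> le z m) /\
    (exists j, le x j /\ le y j /\ forall z, le x z -> le y z -> le j z).

Definition garside_structure (M : G -> Prop) (Delta : G) : Prop :=
  submonoid M /\ pointed M /\
  balanced M Delta /\
  noetherian M /\
  finite_set (Div M Delta) /\
  generates_monoid (Div M Delta) M /\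
  generates_group (Div M Delta) /\
  is_lattice (le_L M).

Definition unmovable (M : G -> Prop) (Delta a : G) : Prop :=
  M a /\ ~ le_L M Delta a.

Definition gensS (M : G -> Prop) (Delta : G) (x : G) : Prop :=
  Div M Delta x /\ x <> gone.

Definition is_word (S : G -> Prop) (l : list G) : Prop :=
  forall x, In x l -> S x \/ S (ginv x).

Definition is_word_length (S : G -> Prop) (x : G) (n : nat) : Prop :=
  (exists l, is_word S l /\ gprod l = x /\ length l = n) /\
  (forall l, is_word S l -> gprod l = x -> (n <= length l)%nat).

(* word length with respect to S (a chosen witness; unique when it exists) *)
Definition word_length (S : G -> Prop) (x : G) : nat :=
  epsilon (inhabits 0%nat) (fun n => is_word_length S x n).

End Garside.

Arguments zpow {G}.
Arguments le_L {G}.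
Arguments garside_structure {G}.
Arguments unmovable {G}.
Arguments gensS {G}.
Arguments word_length {G}.

(* Main.v *)
Require Import Defs.
From Stdlib Require Import ZArith List Lia Classical ClassicalEpsilon.
Import ListNotations.
Open Scope Z_scope.

Section GroupLemmas.
Variable G : Group.
Implicit Types x y z : G.

Lemma gmulVr x : gmul x (ginv x) = gone.
Proof.
  transitivity (gmul (gmul (ginv (ginv x)) (ginv x)) (gmul x (ginv x))).
  { rewrite gmulVl, gmul1l. reflexivity. }
  rewrite <- gmulA, (gmulA _ (ginv x) x), gmulVl, gmul1l, gmulVl. reflexivity.
Qed.

Lemma gmul1r x : gmul x gone = x.
Proof. rewrite <- (gmulVl G x), gmulA, gmulVr, gmul1l. reflexivity. Qed.

Lemma gmulKl x y : gmul (ginv x) (gmul x y) = y.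
Proof. rewrite gmulA, gmulVl, gmul1l. reflexivity. Qed.
Lemma gmulKr x y : gmul x (gmul (ginv x) y) = y.
Proof. rewrite gmulA, gmulVr, gmul1l. reflexivity. Qed.

Lemma ginv_uniq x y : gmul x y = gone -> ginv x = y.
Proof. intro H. rewrite <- (gmulKl x y), H, gmul1r. reflexivity. Qed.

Lemma ginv_inv x : ginv (ginv x) = x.
Proof. apply ginv_uniq. apply gmulVl. Qed.
Lemma ginv1 : ginv (@gone G) = gone.
Proof. apply ginv_uniq. apply gmul1l. Qed.
Lemma ginv_mul x y : ginv (gmul x y) = gmul (ginv y) (ginv x).
Proof. apply ginv_uniq. rewrite <- gmulA, (gmulA _ y), gmulVr, gmul1l, gmulVr. reflexivity. Qed.

Lemma gprod_app (l1 l2 : list G) : gprod G (l1 ++ l2) = gmul (gprod G l1) (gprod G l2).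
Proof. induction l1; simpl. now rewrite gmul1l. now rewrite IHl1, gmulA. Qed.

End GroupLemmas.

Ltac gs := repeat (rewrite ?gmul1l, ?gmul1r, ?ginv_inv, ?ginv1, ?ginv_mul, ?gmulVl, ?gmulVr, ?gmulKl, ?gmulKr, <- ?gmulA).

Section Zpow.
Variable G : Group.
Variable D : G.

Lemma gprod_repeat_r (x : G) n : gprod G (repeat x (S n)) = gmul (gprod G (repeat x n)) x.
Proof.
  replace (repeat x (S n)) with (repeat x n ++ [x]).
  - rewrite gprod_app. simpl. now rewrite gmul1r.
  - induction n; simpl; auto. now rewrite IHn.
Qed.

Lemma zpow_nat n : zpow D (Z.of_nat n) = gprod G (repeat D n).
Proof. destruct n; simpl; auto. now rewrite SuccNat2Pos.id_succ. Qed.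

Lemma zpow_negnat n : zpow D (- Z.of_nat n) = gprod G (repeat (ginv D) n).
Proof. destruct n; simpl; auto. now rewrite SuccNat2Pos.id_succ. Qed.

Lemma zpow_succ z : zpow D (z + 1) = gmul (zpow D z) D.
Proof.
  destruct (Z_le_gt_dec 0 z).
  - replace z with (Z.of_nat (Z.to_nat z)) by lia.
    replace (Z.of_nat (Z.to_nat z) + 1) with (Z.of_nat (S (Z.to_nat z))) by lia.
    rewrite !zpow_nat, gprod_repeat_r. reflexivity.
  - replace z with (- Z.of_nat (S (Z.to_nat (- z - 1)))) by lia.
    replace (- Z.of_nat (S (Z.to_nat (-z - 1))) + 1) with (- Z.of_nat (Z.to_nat (- z - 1))) by lia.
    rewrite !zpow_negnat, gprod_repeat_r. gs. reflexivity.
Qed.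

Lemma zpow_pred z : zpow D (z - 1) = gmul (zpow D z) (ginv D).
Proof.
  replace z with ((z - 1) + 1) at 2 by lia. rewrite zpow_succ. gs. reflexivity.
Qed.

Lemma zpow_add a b : zpow D (a + b) = gmul (zpow D a) (zpow D b).
Proof.
  induction b using Z.peano_ind.
  - rewrite Z.add_0_r. simpl. now rewrite gmul1r.
  - rewrite <- Z.add_1_r, Z.add_assoc, !zpow_succ, IHb. now rewrite gmulA.
  - rewrite <- Z.sub_1_r, Z.add_sub_assoc, !zpow_pred, IHb. now rewrite gmulA.
Qed.

Lemma zpow_opp z : zpow D (- z) = ginv (zpow D z).
Proof.
  symmetry. apply ginv_uniq. rewrite <- zpow_add. now rewrite Z.add_opp_diag_r.
Qed.

Lemma zpow1 : zpow D 1 = D.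
Proof. simpl. apply gmul1r. Qed.

Lemma zpowm1 : zpow D (-1) = ginv D.
Proof. simpl. apply gmul1r. Qed.

End Zpow.
Lemma wl_eq (G : Group) (S : G -> Prop) x n : is_word_length G S x n -> word_length S x = n.
Proof.
  intros H. unfold word_length.
  pose proof (epsilon_spec (inhabits 0%nat) (fun n => is_word_length G S x n) (ex_intro _ n H)) as H2.
  cbv beta in H2. set (e := epsilon _ _) in *. clearbody e.
  destruct H as [(l & Hl1 & Hl2 & Hl3) H]. destruct H2 as [(l' & Hl1' & Hl2' & Hl3') H'].
  specialize (H l' Hl1' Hl2'). specialize (H' l Hl1 Hl2). lia.
Qed.


Section Garside.
Variable G : Group.
Variable M : G -> Prop.
Variable D : G.
Hypothesis M1 : M gone.
Hypothesis Mmul : forall x y : G, M x -> M y -> M (gmul x y).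
Hypothesis pt : pointed G M.
Hypothesis bal : balanced G M D.
Hypothesis lat : is_lattice G (le_L M).

Definition simple (s : G) := M s /\ M (gmul (ginv s) D).

Lemma MD : M D.
Proof. exact (proj1 bal). Qed.

Lemma simple_R s : simple s -> M (gmul D (ginv s)).
Proof. intros Hs. destruct bal as [_ B]. destruct (proj1 (B s) Hs) as [_ H]. exact H. Qed.

Lemma tau_M s : simple s -> M (gmul (ginv D) (gmul s D)).
Proof.
  intros [Hs1 Hs2]. destruct bal as [_ B].
  assert (Hu: Div_R G M D (gmul (ginv s) D)).
  { split; auto. unfold le_R.
    replace (gmul D (ginv (gmul (ginv s) D))) with s by (gs; reflexivity). auto. }
  apply B in Hu. destruct Hu as [_ Hu]. unfold le_L in Hu.
  replace (gmul (ginv (gmul (ginv s) D)) D) with (gmul (ginv D) (gmul s D)) in Hu by (gs; reflexivity).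
  exact Hu.
Qed.

Lemma sigma_M s : simple s -> M (gmul D (gmul s (ginv D))).
Proof.
  intros Hs. pose proof (simple_R s Hs) as Ht. destruct bal as [_ B].
  assert (Hu: Div_L G M D (gmul D (ginv s))).
  { split; auto. unfold le_L.
    replace (gmul (ginv (gmul D (ginv s))) D) with s by (gs; reflexivity). apply Hs. }
  apply B in Hu. destruct Hu as [_ Hu]. unfold le_R in Hu.
  replace (gmul D (ginv (gmul D (ginv s)))) with (gmul D (gmul s (ginv D))) in Hu by (gs; reflexivity).
  exact Hu.
Qed.

Lemma sigma_simple s : simple s -> simple (gmul D (gmul s (ginv D))).
Proof.
  intros Hs. split. apply sigma_M; auto.
  replace (gmul (ginv (gmul D (gmul s (ginv D)))) D) with (gmul D (ginv s)) by (gs; reflexivity).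
  apply simple_R; auto.
Qed.

Lemma dualL_simple s : simple s -> simple (gmul (ginv s) D).
Proof.
  intros Hs. split. apply Hs.
  replace (gmul (ginv (gmul (ginv s) D)) D) with (gmul (ginv D) (gmul s D)) by (gs; reflexivity).
  apply tau_M; auto.
Qed.

Lemma dualR_simple s : simple s -> simple (gmul D (ginv s)).
Proof.
  intros Hs. split. apply simple_R; auto.
  replace (gmul (ginv (gmul D (ginv s))) D) with s by (gs; reflexivity). apply Hs.
Qed.

Lemma tau_simple s : simple s -> simple (gmul (ginv D) (gmul s D)).
Proof.
  intros Hs. split. apply tau_M; auto.
  pose proof (tau_M _ (dualL_simple s Hs)) as H.
  replace (gmul (ginv (gmul (ginv D) (gmul s D))) D) with (gmul (ginv D) (gmul (gmul (ginv s) D) D)) by (gs; reflexivity).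
  exact H.
Qed.

Lemma D_simple : simple D.
Proof. split. apply MD. rewrite gmulVl. auto. Qed.

Lemma one_simple : simple gone.
Proof. split; auto. rewrite ginv1, gmul1l. apply MD. Qed.

Definition SP (N : nat) (m : G) : Prop :=
  exists l, length l = N /\ (forall x, In x l -> simple x) /\ gprod G l = m.

Lemma prod_M (l : list G) : (forall x, In x l -> simple x) -> M (gprod G l).
Proof. induction l; simpl; intros H; auto. apply Mmul; auto. apply H; auto. Qed.

Lemma SP_M N m : SP N m -> M m.
Proof. intros (l & _ & Hl & <-). apply prod_M; auto. Qed.

Lemma key_L (l : list G) : forall t, (forall x, In x l -> simple x) -> simple t ->
  M (gmul (ginv t) (gprod G l)) -> SP (length l) (gmul (ginv t) (gprod G l)).
Proof.
  induction l as [|s1 l IH]; intros t Hl Ht Hx; simpl in *.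
  - rewrite gmul1r in Hx. assert (t = gone) by (apply pt; auto; apply Ht).
    subst t. exists []. simpl. split; [reflexivity|split; [intros x []|gs; reflexivity]].
  - destruct (lat t s1) as [_ [v [Htv [Hsv Hv]]]].
    unfold le_L in *.
    assert (Hs1 : simple s1) by auto.
    assert (HvD : M (gmul (ginv v) D)).
    { apply Hv; [apply Ht | apply Hs1]. }
    assert (HMl : M (gprod G l)) by (apply prod_M; auto).
    assert (Hvx : M (gmul (ginv v) (gmul s1 (gprod G l)))).
    { apply Hv. auto. rewrite gmulKl. auto. }
    assert (Hw : simple (gmul (ginv s1) v)).
    { split; auto.
      replace (gmul (ginv (gmul (ginv s1) v)) D) with (gmul (gmul (ginv v) D) (gmul (ginv D) (gmul s1 D))) by (gs; reflexivity).
      apply Mmul; auto. apply tau_M; auto. }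
    assert (Hz : simple (gmul (ginv t) v)).
    { split; auto.
      replace (gmul (ginv (gmul (ginv t) v)) D) with (gmul (gmul (ginv v) D) (gmul (ginv D) (gmul t D))) by (gs; reflexivity).
      apply Mmul; auto. apply tau_M; auto. }
    destruct (IH (gmul (ginv s1) v)) as (l' & Hlen & Hl' & Hp); auto.
    { replace (gmul (ginv (gmul (ginv s1) v)) (gprod G l)) with (gmul (ginv v) (gmul s1 (gprod G l))) by (gs; reflexivity). auto. }
    exists (gmul (ginv t) v :: l'). simpl. split; [now rewrite Hlen|split].
    + intros x [<-|Hx']; auto.
    + rewrite Hp. gs. reflexivity.
Qed.

Lemma key_D N m : SP N m -> M (gmul (ginv D) m) -> SP (N - 1) (gmul (ginv D) m).
Proof.
  intros (l & <- & Hl & <-) Hm. destruct l as [|s1 l]; simpl in *.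
  - rewrite gmul1r in Hm. assert (HD : D = gone) by (apply pt; auto; apply MD).
    rewrite HD. exists []. simpl. split; [reflexivity|split; [intros x []|gs; reflexivity]].
  - rewrite Nat.sub_0_r.
    assert (Hs1 : simple s1) by auto.
    replace (gmul (ginv D) (gmul s1 (gprod G l))) with (gmul (ginv (gmul (ginv s1) D)) (gprod G l)) in * by (gs; reflexivity).
    apply key_L; auto. apply dualL_simple; auto.
Qed.

Lemma zpow_nat_M n : M (zpow D (Z.of_nat n)).
Proof.
  rewrite zpow_nat. apply prod_M. intros x Hx. apply repeat_spec in Hx. subst. apply D_simple.
Qed.

Lemma key_D1 N m : D <> gone -> SP N m -> M (gmul (ginv D) m) -> (1 <= N)%nat.
Proof.
  intros HD (l & <- & Hl & <-) Hm. destruct l as [|s1 l]; simpl in *; [|lia].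
  exfalso. apply HD. rewrite gmul1r in Hm. apply pt; auto. apply MD.
Qed.

Lemma key_iter E : D <> gone -> forall N m, SP N m -> M (gmul (zpow D (- Z.of_nat E)) m) ->
  (E <= N)%nat /\ SP (N - E) (gmul (zpow D (- Z.of_nat E)) m).
Proof.
  intros HD. induction E as [|E IH]; intros N m HN Hm.
  - simpl in *. rewrite gmul1l in *. rewrite Nat.sub_0_r. split; auto. lia.
  - replace (- Z.of_nat (S E)) with (- Z.of_nat E - 1) in * by lia.
    rewrite zpow_pred in *. rewrite zpow_opp in *.
    replace (N - S E)%nat with (N - 1 - E)%nat by lia.
    rewrite <- gmulA in *.
    assert (HM : M (gmul (ginv D) m)).
    { replace (gmul (ginv D) m) with (gmul (zpow D (Z.of_nat E)) (gmul (ginv (zpow D (Z.of_nat E))) (gmul (ginv D) m))) by (gs; reflexivity).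
      apply Mmul; auto. apply zpow_nat_M. }
    pose proof (key_D1 N m HD HN HM).
    destruct (IH (N - 1)%nat (gmul (ginv D) m)) as [H1 H2]; auto.
    + apply key_D; auto.
    + split; auto. lia.
Qed.

Lemma SP_app a b x y : SP a x -> SP b y -> SP (a + b) (gmul x y).
Proof.
  intros (l1 & <- & H1 & <-) (l2 & <- & H2 & <-). exists (l1 ++ l2).
  rewrite length_app, gprod_app. split; auto. split; auto.
  intros z Hz. apply in_app_or in Hz. destruct Hz; auto.
Qed.

Lemma SP1 s : simple s -> SP 1 s.
Proof. intros Hs. exists [s]. simpl. split; auto. split. intros x [<-|[]]; auto. apply gmul1r. Qed.

Lemma SP0 : SP 0 gone.
Proof. exists []. simpl. split; auto. split; auto. intros x []. Qed.

Lemma sigma_list l : (forall x, In x l -> simple x) ->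
  SP (length l) (gmul D (gmul (gprod G l) (ginv D))).
Proof.
  induction l as [|s l IH]; intros Hl; simpl.
  - replace (gmul D (gmul gone (ginv D))) with (@gone G) by (gs; reflexivity). apply SP0.
  - replace (gmul D (gmul (gmul s (gprod G l)) (ginv D))) with
      (gmul (gmul D (gmul s (ginv D))) (gmul D (gmul (gprod G l) (ginv D)))) by (gs; reflexivity).
    apply (SP_app 1).
    + apply SP1. apply sigma_simple; auto. apply Hl; simpl; auto.
    + apply IH; auto. intros; apply Hl; simpl; auto.
Qed.

Lemma lower_form l : is_word G (gensS M D) l ->
  exists j, (j <= length l)%nat /\ exists m, SP (length l) m /\ gprod G l = gmul (zpow D (- Z.of_nat j)) m.
Proof.
  induction l as [|x l IH] using rev_ind; intros Hw.
  - exists 0%nat. simpl. split; auto. exists gone. split. apply SP0. gs. reflexivity.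
  - destruct IH as (j & Hj & m & Hm & Hp).
    { intros y Hy. apply Hw. apply in_or_app. auto. }
    assert (Hx : gensS M D x \/ gensS M D (ginv x)).
    { apply Hw. apply in_or_app. right. left. auto. }
    rewrite gprod_app, Hp, length_app. simpl. rewrite gmul1r.
    destruct Hx as [[Hx _]|[Hx _]].
    + exists j. split. lia. exists (gmul m x). split.
      apply SP_app; auto. apply SP1. exact Hx.
      gs. reflexivity.
    + exists (S j). split. lia.
      exists (gmul (gmul D (gmul m (ginv D))) (gmul D x)). split.
      * destruct Hm as (lm & <- & Hlm & <-). apply SP_app. apply sigma_list; auto.
        apply SP1. pose proof (dualR_simple _ Hx) as H. rewrite ginv_inv in H. exact H.
      * replace (- Z.of_nat (S j)) with (- Z.of_nat j - 1) by lia.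
        rewrite zpow_pred. gs. reflexivity.
Qed.

Lemma tau_pow_simple n s : simple s ->
  simple (gmul (ginv (zpow D (Z.of_nat n))) (gmul s (zpow D (Z.of_nat n)))).
Proof.
  intros Hs. induction n as [|n IH].
  - simpl. gs. exact Hs.
  - replace (Z.of_nat (S n)) with (Z.of_nat n + 1) by lia. rewrite zpow_succ.
    pose proof (tau_simple _ IH) as H. revert H. gs. auto.
Qed.

Lemma tau_list l : (forall x, In x l -> simple x) ->
  exists l', length l' = length l /\ (forall x, In x l' -> simple (ginv x)) /\
    gprod G l' = gmul (zpow D (- Z.of_nat (length l))) (gprod G l).
Proof.
  induction l as [|s l IH]; intros Hl.
  - exists []. simpl. split; auto. split. intros x []. gs. reflexivity.
  - destruct IH as (l' & Hlen & Hl' & Hp). { intros; apply Hl; simpl; auto. }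
    set (P := zpow D (Z.of_nat (length l))) in *.
    exists (gmul (ginv P) (gmul (ginv D) (gmul s P)) :: l').
    change (length (s :: l)) with (S (length l)).
    change (gprod G (s :: l)) with (gmul s (gprod G l)).
    change (gprod G (?a :: l')) with (gmul a (gprod G l')).
    split. simpl; auto. split.
    + intros x [<-|Hx]; auto.
      pose proof (tau_pow_simple (length l) _ (dualL_simple s (Hl s (or_introl eq_refl)))) as H.
      fold P in H. revert H. gs. auto.
    + rewrite Hp. replace (- Z.of_nat (S (length l))) with (- Z.of_nat (length l) - 1) by lia.
      rewrite zpow_pred, zpow_opp. fold P. gs. reflexivity.
Qed.

Lemma filter_word l : (forall x, In x l -> simple x \/ simple (ginv x)) ->
  exists l', is_word G (gensS M D) l' /\ gprod G l' = gprod G l /\ (length l' <= length l)%nat.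
Proof.
  induction l as [|x l IH]; intros Hl.
  - exists []. split. intros y []. auto.
  - destruct IH as (l' & Hw & Hp & Hlen). { intros; apply Hl; simpl; auto. }
    destruct (classic (x = gone)) as [Hx|Hx].
    + exists l'. simpl. rewrite Hx, Hp, gmul1l. split; auto.
    + exists (x :: l'). simpl. rewrite Hp. split; [|split; auto; lia].
      intros y [Hy|Hy]; [subst y|auto].
      destruct (Hl x (or_introl eq_refl)) as [H|H]; [left|right]; split; auto.
      intro H1. apply Hx. rewrite <- (ginv_inv _ x), H1. apply ginv1.
Qed.

Variable a : G.
Hypothesis Ha : unmovable M D a.

Lemma lower R p (HR : forall N, SP N a -> (R <= N)%nat) l :
  is_word G (gensS M D) l -> gprod G l = gmul (zpow D p) a ->
  Z.max (Z.max (Z.of_nat R + p) (- p)) (Z.of_nat R) <= Z.of_nat (length l).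
Proof.
  intros Hw Hp. destruct (lower_form l Hw) as (j & Hj & m & Hm & Hl).
  assert (Ha' : a = gmul (zpow D (- (p + Z.of_nat j))) m).
  { rewrite Z.opp_add_distr, zpow_add, zpow_opp.
    rewrite Hl in Hp. rewrite <- gmulA, Hp. gs. reflexivity. }
  destruct (Z_lt_le_dec (p + Z.of_nat j) 0) as [Hneg|Hpos].
  - exfalso. apply (proj2 Ha). unfold le_L.
    replace (gmul (ginv D) a) with (gmul (zpow D (Z.of_nat (Z.to_nat (- (p + Z.of_nat j) - 1)))) m).
    + apply Mmul. apply zpow_nat_M; auto. apply SP_M in Hm. exact Hm.
    + rewrite Ha'. replace (Z.of_nat (Z.to_nat (- (p + Z.of_nat j) - 1))) with (-1 + - (p + Z.of_nat j)) by lia.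
      rewrite zpow_add, zpowm1, zpow_opp. gs. reflexivity.
  - replace (p + Z.of_nat j) with (Z.of_nat (Z.to_nat (p + Z.of_nat j))) in Ha' by lia.
    assert (HD : D <> gone).
    { intro HD. apply (proj2 Ha). unfold le_L. rewrite HD, ginv1, gmul1l. apply Ha. }
    pose proof (key_iter (Z.to_nat (p + Z.of_nat j)) HD _ m Hm) as H.
    rewrite <- Ha' in H. destruct H as [H0 H]. apply (proj1 Ha). apply HR in H. lia.
Qed.


Lemma upper R p : SP R a -> exists l, is_word G (gensS M D) l /\ gprod G l = gmul (zpow D p) a /\
  Z.of_nat (length l) <= Z.max (Z.max (Z.of_nat R + p) (- p)) (Z.of_nat R).
Proof.
  intros (la & HR & Hla & Hpa).
  assert (H0 : forall l0, (forall x, In x l0 -> simple x \/ simple (ginv x)) ->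
     gprod G l0 = gmul (zpow D p) a ->
     Z.of_nat (length l0) <= Z.max (Z.max (Z.of_nat R + p) (- p)) (Z.of_nat R) ->
     exists l, is_word G (gensS M D) l /\ gprod G l = gmul (zpow D p) a /\
       Z.of_nat (length l) <= Z.max (Z.max (Z.of_nat R + p) (- p)) (Z.of_nat R)).
  { intros l0 H1 H2 H3. destruct (filter_word l0 H1) as (l & Hw & Hp & Hlen).
    exists l. split; auto. split. congruence. lia. }
  destruct (Z_le_gt_dec 0 p) as [Hp0|Hp0].
  - apply (H0 (repeat D (Z.to_nat p) ++ la)).
    + intros x Hx. apply in_app_or in Hx. destruct Hx as [Hx|Hx]; auto.
      apply repeat_spec in Hx. subst. left. apply D_simple.
    + rewrite gprod_app, <- zpow_nat, Hpa. f_equal. f_equal. lia.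
    + rewrite length_app, repeat_length. lia.
  - destruct (Z_le_gt_dec p (- Z.of_nat R)) as [Hp1|Hp1].
    + destruct (tau_list la Hla) as (l' & Hl'len & Hl' & Hl'p).
      apply (H0 (repeat (ginv D) (Z.to_nat (- p - Z.of_nat R)) ++ l')).
      * intros x Hx. apply in_app_or in Hx. destruct Hx as [Hx|Hx]; auto.
        apply repeat_spec in Hx. subst. right. rewrite ginv_inv. apply D_simple.
      * rewrite gprod_app, <- zpow_negnat, Hl'p, Hpa, HR, gmulA, <- zpow_add. f_equal. f_equal. lia.
      * rewrite length_app, repeat_length. lia.
    + set (q := Z.to_nat (- p)).
      assert (Hq : (q <= length la)%nat) by lia.
      destruct (tau_list (firstn q la)) as (l' & Hl'len & Hl' & Hl'p).
      { intros x Hx. apply Hla. rewrite <- (firstn_skipn q la). apply in_or_app; auto. }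
      rewrite (firstn_length_le _ Hq) in Hl'len, Hl'p.
      apply (H0 (l' ++ skipn q la)).
      * intros x Hx. apply in_app_or in Hx. destruct Hx as [Hx|Hx]; auto.
        left. apply Hla. rewrite <- (firstn_skipn q la). apply in_or_app; auto.
      * rewrite gprod_app, Hl'p, <- Hpa, <- gmulA, <- gprod_app, firstn_skipn.
        f_equal. f_equal. lia.
      * rewrite length_app, length_skipn. lia.
Qed.

End Garside.

Lemma min_exists (P : nat -> Prop) : (exists n, P n) -> exists n, P n /\ forall m, P m -> (n <= m)%nat.
Proof.
  intros [n Hn]. apply NNPP. intro Hno.
  assert (forall k, forall i, (i <= k)%nat -> ~ P i).
  { induction k as [|k IH]; intros i Hi HPi.
    - apply Hno. exists i. split; auto. intros; lia.
    - destruct (Nat.eq_dec i (S k)) as [->|Hne].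
      + apply Hno. exists (S k). split; auto. intros m Hm.
        destruct (Nat.le_gt_cases (S k) m); auto. exfalso. apply (IH m); auto. lia.
      + apply (IH i); auto. lia. }
  apply (H n n); auto.
Qed.

Theorem corollary2p4 (G : Group) (M : G -> Prop) (Delta : G)
  (HG : garside_structure M Delta)
  (alpha : G) (p : Z) (a : G)
  (Ha : unmovable M Delta a) (Hform : alpha = gmul (zpow Delta p) a) :
  let lg := word_length (gensS M Delta) in
  (0 <= p -> Z.of_nat (lg alpha) = Z.of_nat (lg a) + p) /\
  (p <= - Z.of_nat (lg a) -> Z.of_nat (lg alpha) = - p) /\
  (- Z.of_nat (lg a) <= p <= 0 -> Z.of_nat (lg alpha) = Z.of_nat (lg a)) /\
  Z.of_nat (lg alpha) = Z.max (Z.max (Z.of_nat (lg a) + p) (- p)) (Z.of_nat (lg a)).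
Proof.
  destruct HG as ([M1 Mmul] & pt & bal & noeth & fin & gen & ggen & lat).
  destruct (min_exists (fun N => SP G M Delta N a)) as (R & HR & Hmin).
  { destruct (proj1 (gen a) (proj1 Ha)) as (l & Hl & Hp). exists (length l), l. split; auto. }
  assert (Hlen : forall q beta, beta = gmul (zpow Delta q) a ->
    word_length (gensS M Delta) beta = Z.to_nat (Z.max (Z.max (Z.of_nat R + q) (- q)) (Z.of_nat R))).
  { intros q beta ->. apply wl_eq.
    destruct (upper G M Delta M1 bal a Ha R q HR) as (l & Hw & Hp & Hl).
    pose proof (lower G M Delta M1 Mmul pt bal lat a Ha R q Hmin l Hw Hp).
    split.
    - exists l. split; auto. split; auto. lia.
    - intros l' Hw' Hp'. pose proof (lower G M Delta M1 Mmul pt bal lat a Ha R q Hmin l' Hw' Hp'). lia. }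
  intros lg. unfold lg.
  rewrite (Hlen p alpha Hform).
  rewrite (Hlen 0 a) by (simpl; rewrite gmul1l; reflexivity).
  lia.
Qed.
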